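(* There exists a constant $c_0$, depending only on $s$ and $d$, such that the following holds whenever $c_{db}\ge c_0$. Let $Q_0,Q_1,\dots,Q_n\in\mathcal D$ be cubes such that $Q_j$ is a child of $Q_{j-1}$ for $1\le j\le n$, and suppose that $Q_j$ is not $p$-doubling (with constant $c_{db}$) for $1\le j\le n$. Then $$\Theta(Q_j)\le 2^{-j/2}\,p(Q_0)\qquad\text{for }0\le j\le n.$$
   Context: $0<s<d$. $E\subset\mathbb R^d$ is a Cantor set built from a compact $Q^0$ by repeatedly choosing, inside each closed ''cube'' $Q$ of generation $k$, a finite nonempty family of closed children (the cubes of generation $k+1$), such that each child $Q'$ of $Q$ satisfies $\frac18\ell(Q)\le\ell(Q')\le\frac13\ell(Q)$, where $\ell(Q)=\operatorname{diam}(Q)$, and distinct children of $Q$ are at distance $\ge c_{sep}\ell(Q)$. $\mathcal D$ is the family of all such cubes. $\mu$ is a finite Borel measure supported on $E$ with $\mu(Q)>0$ for all $Q\in\mathcal D$. $\Theta(Q)=\mu(Q)/\ell(Q)^s$, $p(Q)=\sum_{P\in\mathcal D,\,P\supset Q}\frac{\ell(Q)}{\ell(P)}\Theta(P)$, and $Q$ is $p$-doubling with constant $c_{db}$ if $p(Q)\le c_{db}\Theta(Q)$. *)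

(* Defs.v *)
From HB Require Import structures.
From mathcomp Require Import all_boot all_order all_algebra.
From mathcomp Require Import all_classical all_reals all_analysis.
Set Implicit Arguments. Unset Strict Implicit. Unset Printing Implicit Defensive.
Import Order.TTheory GRing.Theory Num.Theory.
Import numFieldNormedType.Exports.
Local Open Scope classical_set_scope.
Local Open Scope ring_scope.

Section CantorDefs.
Variables (R : realType) (d : nat).

(* Points of R^d are row vectors; topology of 'rV[R]_d is the product
   (= Euclidean) topology. *)
Local Notation V := 'rV[R]_d.

Definition edist (x y : V) : R :=
  Num.sqrt (\sum_(i < d) (x ord0 i - y ord0 i) ^+ 2).

Definition diam (A : set V) : R :=
  sup [set r | exists x y, A x /\ A y /\ r = edist x y].

Definition setdist (A B : set V) : R :=
  inf [set r | exists x y, A x /\ B y /\ r = edist x y].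

Definition Rd_borel := g_sigma_algebraType (@open V).

(* The tree of cubes: a node is a word w : seq nat (the child of w with
   label i is i :: w); nch w is the number of children of node w,
   cube w is the cube attached to w. *)
Fixpoint valid (nch : seq nat -> nat) (w : seq nat) : bool :=
  match w with
  | [::] => true
  | i :: w' => (i < nch w')%N && valid nch w'
  end.

Definition cantor_construction (csep : R) (nch : seq nat -> nat)
    (cube : seq nat -> set V) : Prop :=
  forall w, valid nch w ->
    [/\ compact (cube w),
        (0 < nch w)%N,
        (forall i, (i < nch w)%N ->
           cube (i :: w) `<=` cube w /\
           diam (cube w) / 8 <= diam (cube (i :: w)) <= diam (cube w) / 3)
      & (forall i j, (i < nch w)%N -> (j < nch w)%N -> i <> j ->
           csep * diam (cube w) <= setdist (cube (i :: w)) (cube (j :: w)))].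

Definition cubes (nch : seq nat -> nat) (cube : seq nat -> set V) : set (set V) :=
  [set A | exists w, valid nch w /\ A = cube w].

Definition is_child (nch : seq nat -> nat) (cube : seq nat -> set V)
    (Q' Q : set V) : Prop :=
  exists w i, [/\ valid nch w, (i < nch w)%N, Q = cube w & Q' = cube (i :: w)].

Definition cantor_set (nch : seq nat -> nat) (cube : seq nat -> set V) : set V :=
  \bigcap_(k in [set: nat])
     [set x | exists w, [/\ valid nch w, size w = k & cube w x]].

Definition Theta (s : R) (mu : set Rd_borel -> \bar R) (Q : set V) : R :=
  fine (mu Q) / (diam Q `^ s).

Definition pcoef (s : R) (mu : set Rd_borel -> \bar R)
    (nch : seq nat -> nat) (cube : seq nat -> set V) (Q : set V) : \bar R :=
  (\esum_(P in [set P | cubes nch cube P /\ Q `<=` P])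
     ((diam Q / diam P) * Theta s mu P)%:E)%E.

Definition p_doubling (s cdb : R) (mu : set Rd_borel -> \bar R)
    (nch : seq nat -> nat) (cube : seq nat -> set V) (Q : set V) : Prop :=
  (pcoef s mu nch cube Q <= (cdb * Theta s mu Q)%:E)%E.

End CantorDefs.

(* Main.v *)
Require Import Defs.
From HB Require Import structures.
From mathcomp Require Import all_boot all_order all_algebra.
From mathcomp Require Import all_classical all_reals all_analysis.
From mathcomp Require Import lra.
Import Order.TTheory GRing.Theory Num.Theory.
Import numFieldNormedType.Exports.
Local Open Scope classical_set_scope.
Local Open Scope ring_scope.

Section Aux.
Variables (R : realType) (d : nat).
Local Notation V := 'rV[R]_d.

Lemma edist_ge0 (x y : V) : 0 <= Defs.edist x y.
Proof. exact: sqrtr_ge0. Qed.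

Lemma edist_xx (x : V) : Defs.edist x x = 0.
Proof.
rewrite /Defs.edist big1 ?sqrtr0// => i _; by rewrite subrr expr0n.
Qed.

Lemma diam_ge0 (A : set V) : 0 <= Defs.diam A.
Proof.
rewrite /Defs.diam; set S := [set r | _].
have [hs|nhs] := pselect (has_sup S); last by rewrite sup_out.
case: (hs) => -[r [x [y [Ax [Ay er]]]]] _.
apply: le_trans (edist_ge0 x y) _; apply: sup_upper_bound => //.
by exists x, y.
Qed.

Lemma setdist_le0 (A B : set V) z : A z -> B z -> Defs.setdist A B <= 0.
Proof.
move=> Az Bz; rewrite /Defs.setdist; set S := [set r | _].
have S0 : S 0 by exists z, z; rewrite edist_xx.
apply: (ge_inf _ S0); exists 0 => r [x [y [_ [_ ->]]]]; exact: edist_ge0.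
Qed.

Lemma esumZ_le (T : choiceType) (S : set T) (r : R) (f : T -> \bar R) :
  0 <= r -> (forall x, (0 <= f x)%E) ->
  (\esum_(i in S) (r%:E * f i) <= r%:E * \esum_(i in S) f i)%E.
Proof.
move=> r0 f0; apply: ge_ereal_sup => _ [X XS <-].
rewrite -ge0_mule_fsumr//; apply: lee_wpmul2l; first by rewrite lee_fin.
by apply: ereal_sup_ubound; exists X.
Qed.

Variables (csep : R) (nch : seq nat -> nat) (cube : seq nat -> set V).
Hypothesis cc : cantor_construction csep nch cube.
Hypothesis csep0 : 0 < csep.

Lemma valid_cat v u : valid nch (v ++ u) -> valid nch u.
Proof. by elim: v => [|a v IH] //= /andP[_ /IH]. Qed.

Lemma cube_cat v u : valid nch (v ++ u) -> cube (v ++ u) `<=` cube u.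
Proof.
elim: v => [|a v IH] /=; first by move=> _. move=> /andP[av vu].
have [_ _ ch _] := cc _ vu; have [sub _] := ch a av.
exact: subset_trans sub (IH vu).
Qed.

Lemma diam_cat v u : valid nch (v ++ u) -> Defs.diam (cube (v ++ u)) <= Defs.diam (cube u).
Proof.
elim: v => [|a v IH] /=; first by move=> _. move=> /andP[av vu].
have [_ _ ch _] := cc _ vu; have [_ /andP[_ h]] := ch a av.
have := IH vu; have := diam_ge0 (cube (v ++ u)); lra.
Qed.

Lemma suffix_of w' y : valid nch w' -> valid nch y -> cube y `<=` cube w' ->
  0 < Defs.diam (cube y) -> (exists z, cube y z) -> exists v, y = v ++ w'.
Proof.
elim: w' => [|a u IH] /=; first by move=> *; exists y; rewrite cats0.
move=> /andP[au vu] vy sub dpos [z yz].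
have [_ _ ch sep] := cc _ vu; have [subau /andP[_ dau]] := ch a au.
have [v ev] := IH vu vy (subset_trans sub subau) dpos (ex_intro _ z yz).
case/lastP: v ev => [|v b] ev.
  rewrite /= in ev; subst y.
  have eqs : cube u = cube (a :: u) by apply/seteqP; split.
  rewrite -eqs in dau; lra.
have dl := diam_cat (rcons v b) u; rewrite -ev in dl; have dl' := dl vy.
rewrite cat_rcons in ev.
have vbu : valid nch (b :: u) by apply: (@valid_cat v); rewrite -ev.
have bu : (b < nch u)%N by case/andP: vbu.
case: (eqVneq b a) => [eba|nba]; first by exists v; rewrite ev eba.
have hs := sep a b au bu (fun e => (negP nba) (introT eqP (esym e))).
have zb : cube (b :: u) z by move: yz vy; rewrite ev => yz vy; exact: (cube_cat _ _ vy z yz).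
have := setdist_le0 _ _ _ (sub z yz) zb.
have : 0 < csep * Defs.diam (cube u) by apply: mulr_gt0 => //; lra.
lra.
Qed.

Lemma anc_split w i P : valid nch w -> (i < nch w)%N -> 0 < Defs.diam (cube (i :: w)) ->
  (exists z, cube (i :: w) z) -> cubes nch cube P -> cube (i :: w) `<=` P ->
  P = cube (i :: w) \/ cube w `<=` P.
Proof.
move=> vw iw dpos ne [w' [vw' ->]] sub.
have viw : valid nch (i :: w) by rewrite /= iw vw.
have [[|a v] ev] := suffix_of _ _ vw' viw sub dpos ne.
  by left; rewrite ev.
right; case: ev => _ ew; rewrite ew; apply: cube_cat; by rewrite -ew.
Qed.

End Aux.
Arguments diam_ge0 {R d}.
Arguments esumZ_le {R}.
Arguments anc_split {R d csep nch cube}.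

Section Meas.
Variables (R : realType) (d : nat) (s : R).
Variable (mu : {finite_measure set (Rd_borel R d) -> \bar R}).
Variables (csep : R) (nch : seq nat -> nat) (cube : seq nat -> set 'rV[R]_d).
Hypothesis cc : cantor_construction csep nch cube.
Hypothesis csep0 : 0 < csep.
Hypothesis s0 : 0 < s.
Hypothesis mupos : forall Q, cubes nch cube Q -> (0 < mu Q)%E.

Local Notation dm := (@Defs.diam R d).
Local Notation Th := (Defs.Theta s mu).
Local Notation pc := (Defs.pcoef s mu nch cube).

Lemma Theta_ge0 Q : 0 <= Th Q.
Proof. apply: divr_ge0; [apply: fine_ge0; exact: measure_ge0 | exact: powR_ge0]. Qed.

Lemma term_ge0 Q P : (0 <= ((dm Q / dm P) * Th P)%:E)%E.
Proof. rewrite lee_fin; apply: mulr_ge0; [apply: divr_ge0; exact: diam_ge0 | exact: Theta_ge0]. Qed.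

Lemma pcoef_ge0 Q : (0 <= pc Q)%E.
Proof. by apply: esum_ge0 => P _; exact: term_ge0. Qed.

Lemma pcoef_diam0 Q : dm Q = 0 -> pc Q = 0%E.
Proof. by move=> dQ; rewrite /Defs.pcoef esum1 // => P _; rewrite dQ !mul0r. Qed.

Lemma diam_cases Q : dm Q = 0 \/ 0 < dm Q.
Proof.
by have := diam_ge0 Q; rewrite le_eqVlt => /orP[/eqP <-|]; [left|right].
Qed.

Lemma Theta_le_pcoef Q : cubes nch cube Q -> ((Th Q)%:E <= pc Q)%E.
Proof.
move=> cQ; have [dQ0|dpos] := diam_cases Q.
  by rewrite /Defs.Theta dQ0 powR0 ?gt_eqF // invr0 mulr0 pcoef_ge0.
apply: esum_ge; exists [set Q]; first by rewrite /fsets /=; split; [exact: finite_set1|move=> P ->; split].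

by rewrite fsbig_set1 divff ?mul1r // gt_eqF.
Qed.

Lemma key_ineq w i : valid nch w -> (i < nch w)%N -> 0 < dm (cube (i :: w)) ->
  (pc (cube (i :: w)) <= (Th (cube (i :: w)))%:E + (3^-1)%:E * pc (cube w))%E.
Proof.
move=> vw iw dpos.
have viw : valid nch (i :: w) by rewrite /= iw vw.
have [_ _ ch _] := cc _ vw; have [subQ /andP[_ dQQ']] := ch i iw.
have cQ : cubes nch cube (cube (i :: w)) by exists (i :: w).
have ne : exists z, cube (i :: w) z.
  have muQ := mupos _ cQ.
  have : cube (i :: w) != set0 by apply: contraTneq muQ => ->; rewrite measure0 ltxx.
  by move/set0P.
set Q := cube (i :: w) in dpos ne cQ subQ dQQ' *.
set Q' := cube w in subQ dQQ' *.
pose f (A P : set 'rV[R]_d) := ((dm A / dm P) * Th P)%:E.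
pose S (A : set 'rV[R]_d) := [set P | cubes nch cube P /\ A `<=` P].
have e1 := esum_mkcond [set Q] (f Q).
have e2 := esum_mkcond (S Q') (fun P => (3^-1)%:E * f Q' P)%E.
rewrite /Defs.pcoef -/(f Q) -/(S Q) -/(f Q') -/(S Q').
rewrite esum_mkcond.
apply: (@le_trans _ _ (\esum_(P in [set: set 'rV[R]_d])
   ((if P \in [set Q] then f Q P else 0) +
    (if P \in S Q' then (3^-1)%:E * f Q' P else 0)))%E).
  apply: le_esum => P _.
  have g1 : (0 <= if P \in [set Q] then f Q P else 0)%E.
    by case: ifP => // _; exact: term_ge0.
  have g2 : (0 <= if P \in S Q' then (3^-1)%:E * f Q' P else 0)%E.
    by case: ifP => // _; apply: mule_ge0; [by rewrite lee_fin invr_ge0 | exact: term_ge0].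
  case: ifPn => [/set_mem [cP sQP]|_]; last by rewrite adde_ge0.
  have [eP|sQ'P] := anc_split cc csep0 _ _ _ vw iw dpos ne cP sQP.
    rewrite -[X in (X <= _)%E]adde0; apply: leeD => //.
    by rewrite ifT // inE.
  rewrite -[X in (X <= _)%E]add0e; apply: leeD => //.
  rewrite ifT; last by rewrite inE.
  rewrite /f -EFinM lee_fin -!mulrA.
  have k0 : 0 <= (dm P)^-1 * Th P by rewrite mulr_ge0 ?invr_ge0 ?diam_ge0 ?Theta_ge0.
  set k := (dm P)^-1 * Th P in k0 *.
  nra.
rewrite esumD; last 2 first.
- by move=> P _; case: ifP => // _; exact: term_ge0.
- by move=> P _; case: ifP => // _; apply: mule_ge0; [by rewrite lee_fin invr_ge0 | exact: term_ge0].
rewrite -e1 -e2 esum_set1 ?term_ge0 //; apply: leeD.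
  by rewrite /f divff ?mul1r // gt_eqF.
apply: esumZ_le; first by rewrite invr_ge0.
by move=> P; exact: term_ge0.
Qed.

Lemma step w i c : 3 <= c -> valid nch w -> (i < nch w)%N ->
  ~ p_doubling s c mu nch cube (cube (i :: w)) ->
  (pc (cube (i :: w)) <= (2^-1)%:E * pc (cube w))%E.
Proof.
move=> c3 vw iw nd.
have [dQ0|dpos] := diam_cases (cube (i :: w)).
  rewrite pcoef_diam0 //; apply: mule_ge0; [by rewrite lee_fin invr_ge0 | exact: pcoef_ge0].
have K := key_ineq _ _ vw iw dpos.
have L : ((c * Th (cube (i :: w)))%:E < pc (cube (i :: w)))%E.
  by rewrite ltNge; apply/negP.
have a0 := Theta_ge0 (cube (i :: w)).
have p0 := pcoef_ge0 (cube (i :: w)); have q0 := pcoef_ge0 (cube w).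
move: K L p0 q0 a0; set a := Th _; set p := pc (cube (i :: w)); set q := pc (cube w).
case: q => [q| |] K L p0 q0 a0.
- case: p K L p0 => [p| |] K L p0.
  + rewrite -EFinM -EFinD !lee_fin in K *; rewrite lte_fin in L.
    have : 3 * a <= c * a by apply: ler_wpM2r.
    lra.
  + by rewrite -EFinM -EFinD leNgt ltry in K.
  + by move: p0; rewrite leNgt ltNyr.
- by rewrite gt0_muley ?lte_fin ?invr_gt0 // leey.
- by move: q0; rewrite leNgt ltNyr.
Qed.

End Meas.

Theorem lemma2p1 (R : realType) (d : nat) (s : R) :
  0 < s -> s < d%:R ->
  exists c0 : R, forall cdb : R, c0 <= cdb ->
  forall (csep : R) (nch : seq nat -> nat) (cube : seq nat -> set 'rV[R]_d)
         (mu : {finite_measure set (Rd_borel R d) -> \bar R}),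
    0 < csep ->
    cantor_construction csep nch cube ->
    mu (~` cantor_set nch cube) = 0%E ->
    (forall Q, cubes nch cube Q -> (0 < mu Q)%E) ->
  forall (n : nat) (Qs : nat -> set 'rV[R]_d),
    cubes nch cube (Qs 0%N) ->
    (forall j, (1 <= j <= n)%N -> is_child nch cube (Qs j) (Qs j.-1)) ->
    (forall j, (1 <= j <= n)%N -> ~ p_doubling s cdb mu nch cube (Qs j)) ->
  forall j, (j <= n)%N ->
    ((Theta s mu (Qs j))%:E
       <= (2 `^ (- (j%:R / 2)))%:E * pcoef s mu nch cube (Qs 0%N))%E.
Proof.
move=> s0 sd; exists 3 => cdb c3 csep nch cube mu csep0 cc _ mupos n Qs cQ0 child nd.
have cubesQ : forall j, (j <= n)%N -> cubes nch cube (Qs j).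
  case=> [|j] jn //.
  have [w [i [vw iw _ ->]]] := child j.+1 (jn : (1 <= j.+1 <= n)%N).
  by exists (i :: w); split => //=; rewrite iw vw.
have geo : forall j, (j <= n)%N ->
    (pcoef s mu nch cube (Qs j) <= ((2^-1)^+j)%:E * pcoef s mu nch cube (Qs 0%N))%E.
  elim=> [|j IH] jn; first by rewrite expr0 mul1e.
  have [w [i [vw iw e1 e2]]] := child j.+1 (jn : (1 <= j.+1 <= n)%N).
  have nd' := nd j.+1 (jn : (1 <= j.+1 <= n)%N).
  rewrite /= in e1.
  apply: (@le_trans _ _ ((2^-1)%:E * pcoef s mu nch cube (Qs j))%E).
    rewrite e1 e2; rewrite e2 in nd'.
    exact: (@step R d s mu csep nch cube cc csep0 mupos w i cdb c3 vw iw nd').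
  rewrite exprS EFinM -muleA; apply: lee_wpmul2l; first by rewrite lee_fin invr_ge0.
  exact: IH (ltnW jn).
move=> j jn.
apply: le_trans (@Theta_le_pcoef R d s mu nch cube s0 _ (cubesQ j jn)) _.
apply: le_trans (geo j jn) _.
apply: lee_wpmul2r; first exact: (@pcoef_ge0 R d s mu nch cube).
rewrite lee_fin exprVn -powR_mulrn // -powRN.
apply: ler_powR; first lra.
have : 0 <= j%:R :> R by [].
lra.
Qed.
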